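(* Let $0<\mu<1/4$ and $\kappa\in\mathbb{R}$. Let $f(x)=(1+\mu\cos x)^{-2}$, $g(y)=y^2(1-y^2)$, and let $K$ be the Gaussian curvature of the metric $(f(x)+g(y))(dx^2+dy^2)$ on $\mathbb{R}\times[-1,1]$. Let $\gamma(s)=\tfrac12\operatorname{sech}s$, and consider the curve $y(x)=\gamma(\kappa+x+\mu\sin x)$. Define $$I(x):=K_x(x,y(x))\,g(y(x))-K_y(x,y(x))\,f(x)\,y'(x)$$ and, for $L>0$, $$B_L(\kappa):=\int_{-\infty}^{-L}I(x)\,dx+\int_{L}^{\infty}I(x)\,dx .$$ Then $$|B_L(\kappa)|\le 1200\,(1+2e^{2|\kappa|})\,\gamma(L)^2 .$$
   Context: $K_x,K_y$ are the partial derivatives of $K$ in $x$ and $y$. The curve $y=\gamma(\kappa+x+\mu\sin x)$ is a geodesic of this metric lying on the homoclinic connection of the closed geodesic $\{y=0\}$. *)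

(* Defs.v *)
From Stdlib Require Import Reals.
From Coquelicot Require Import Coquelicot.
Open Scope R_scope.

Definition fcoef (mu x : R) : R := / (1 + mu * cos x) ^ 2.
Definition gcoef (y : R) : R := y ^ 2 * (1 - y ^ 2).

(* conformal factor lambda = f + g of the metric lambda (dx^2 + dy^2) *)
Definition lam (mu x y : R) : R := fcoef mu x + gcoef y.

(* Gaussian curvature of lambda (dx^2+dy^2):
   K = - (1 / (2 lambda)) * Laplacian (ln lambda) *)
Definition Kcurv (mu x y : R) : R :=
  - / (2 * lam mu x y) *
    (Derive (fun t => Derive (fun s => ln (lam mu s y)) t) x
     + Derive (fun t => Derive (fun s => ln (lam mu x s)) t) y).

Definition Kx (mu x y : R) : R := Derive (fun t => Kcurv mu t y) x.
Definition Ky (mu x y : R) : R := Derive (fun t => Kcurv mu x t) y.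

Definition sech (s : R) : R := 2 / (exp s + exp (- s)).
Definition gam (s : R) : R := / 2 * sech s.

Definition ycurve (mu kappa x : R) : R := gam (kappa + x + mu * sin x).

Definition Iint (mu kappa x : R) : R :=
  Kx mu x (ycurve mu kappa x) * gcoef (ycurve mu kappa x)
  - Ky mu x (ycurve mu kappa x) * fcoef mu x * Derive (ycurve mu kappa) x.

(* Main.v *)
Require Import Defs.
From Stdlib Require Import Reals Lra.
From Coquelicot Require Import Coquelicot.
Open Scope R_scope.

Lemma Rpos_exp_bound (M eps B : R) : 0 <= M -> 0 < eps -> M / eps <= B ->
  M / 2 * exp (-2 * B) < eps.
Proof.
  intros HM He HB.
  assert (HB0 : 0 <= B).
  { apply Rle_trans with (M/eps); auto. apply Rmult_le_pos; auto. left; apply Rinv_0_lt_compat; auto. }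
  assert (Hexp : 1 + 2 * B <= exp (2 * B)).
  { destruct (Req_dec (2*B) 0) as [H0|H0]. rewrite H0, exp_0. lra. left; apply exp_ineq1; auto. }
  assert (Hinv : exp (-2 * B) = / exp (2 * B)).
  { replace (-2*B) with (- (2*B)) by ring. apply exp_Ropp. }
  rewrite Hinv.
  assert (Hpe : 0 < exp (2*B)) by apply exp_pos.
  assert (HMB : M <= eps * B).
  { apply Rmult_le_compat_l with (r:=eps) in HB; [|lra].
    unfold Rdiv in HB. rewrite <- Rmult_assoc, (Rmult_comm eps M), Rmult_assoc, Rinv_r in HB; lra. }
  apply Rmult_lt_reg_r with (exp (2*B)); auto.
  rewrite Rmult_assoc, Rinv_l by lra. nra.
Qed.

Lemma cont_h_right M (x : R) : continuous (fun t => M * exp (-2*t)) x.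
Proof. apply (ex_derive_continuous (K:=R_AbsRing) (V:=R_NormedModule)). auto_derive. auto. Qed.
Lemma cont_h_left M (x : R) : continuous (fun t => M * exp (2*t)) x.
Proof. apply (ex_derive_continuous (K:=R_AbsRing) (V:=R_NormedModule)). auto_derive. auto. Qed.

Lemma RInt_h_right M a b : RInt (fun t => M * exp (-2*t)) a b = M/2 * (exp (-2*a) - exp (-2*b)).
Proof.
  apply is_RInt_unique.
  replace (M/2 * (exp (-2*a) - exp (-2*b))) with
    (minus ((fun t => - M/2 * exp (-2*t)) b) ((fun t => - M/2 * exp (-2*t)) a))
    by (unfold minus, plus, opp; simpl; unfold Rminus; field).
  apply (is_RInt_derive (fun t => - M/2 * exp (-2*t))).
  - intros x _. auto_derive. auto. field.
  - intros x _. apply cont_h_right.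
Qed.

Lemma RInt_h_left M a b : RInt (fun t => M * exp (2*t)) a b = M/2 * (exp (2*b) - exp (2*a)).
Proof.
  apply is_RInt_unique.
  replace (M/2 * (exp (2*b) - exp (2*a))) with
    (minus ((fun t => M/2 * exp (2*t)) b) ((fun t => M/2 * exp (2*t)) a))
    by (unfold minus, plus, opp; simpl; unfold Rminus; field).
  apply (is_RInt_derive (fun t => M/2 * exp (2*t))).
  - intros x _. auto_derive. auto. field.
  - intros x _. apply cont_h_left.
Qed.

Lemma RInt_abs_bound (f h : R -> R) a b : a <= b ->
  (forall x, continuous f x) -> (forall x, continuous h x) ->
  (forall x, a <= x <= b -> Rabs (f x) <= h x) ->
  Rabs (RInt f a b) <= RInt h a b.
Proof.
  intros Hab Hf Hh Hb.
  assert (Ef : ex_RInt f a b) by (apply (ex_RInt_continuous (V:=R_CompleteNormedModule)); auto).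
  assert (Eh : ex_RInt h a b) by (apply (ex_RInt_continuous (V:=R_CompleteNormedModule)); auto).
  assert (Eoh : ex_RInt (fun x => opp (h x)) a b).
  { apply (ex_RInt_continuous (V:=R_CompleteNormedModule)). intros z _. apply (continuous_opp h). auto. }
  assert (H1 : RInt f a b <= RInt h a b).
  { apply RInt_le; auto. intros x Hx. specialize (Hb x ltac:(lra)).
    apply Rabs_le_between in Hb. lra. }
  assert (H2 : RInt (fun x => opp (h x)) a b <= RInt f a b).
  { apply RInt_le; auto. intros x Hx. specialize (Hb x ltac:(lra)).
    apply Rabs_le_between in Hb. unfold opp; simpl. lra. }
  rewrite (RInt_opp (V:=R_CompleteNormedModule)) in H2 by auto. unfold opp in H2; simpl in H2.
  apply Rabs_le. lra.
Qed.

Lemma ball_R (x y eps : R) : Rabs (y - x) < eps -> ball x eps y.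
Proof. intros H. unfold ball; simpl. unfold AbsRing_ball, abs, minus, plus, opp; simpl. exact H. Qed.
Lemma ball_R' (x y eps : R) : ball x eps y -> Rabs (y - x) < eps.
Proof. intros H. unfold ball in H; simpl in H. unfold AbsRing_ball, abs, minus, plus, opp in H; simpl in H. exact H. Qed.

Lemma tail_right (f : R -> R) (M L : R) :
  (forall x, continuous f x) -> 0 <= M ->
  (forall x, L <= x -> Rabs (f x) <= M * exp (-2 * x)) ->
  exists l, is_RInt_gen f (at_point L) (Rbar_locally p_infty) l /\
            Rabs l <= M / 2 * exp (-2 * L).
Proof.
  intros Hf HM Hb.
  set (h := fun t => M * exp (-2*t)).
  assert (Key : forall a b, L <= a <= b -> Rabs (RInt f a b) <= M/2 * (exp (-2*a) - exp (-2*b))).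
  { intros a b Hab. rewrite <- RInt_h_right. apply RInt_abs_bound; try lra; auto.
    intros; apply cont_h_right. intros x Hx; apply Hb; lra. }
  assert (Ex : forall a b, ex_RInt f a b) by (intros; apply (ex_RInt_continuous (V:=R_CompleteNormedModule)); auto).
  set (F := fun b => RInt f L b).
  assert (Hc : exists l, filterlim F (Rbar_locally p_infty) (locally l)).
  { apply (filterlim_locally_cauchy (F := Rbar_locally p_infty)).
    intros eps. exists (fun b => Rmax L (M / eps) < b). split.
    - exists (Rmax L (M/eps)). auto.
    - intros u v Hu Hv. apply ball_R.
      assert (HuL := Rle_trans _ _ _ (Rmax_l L (M/eps)) (Rlt_le _ _ Hu)).
      assert (HvL := Rle_trans _ _ _ (Rmax_l L (M/eps)) (Rlt_le _ _ Hv)).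
      assert (Hu' := Rle_trans _ _ _ (Rmax_r L (M/eps)) (Rlt_le _ _ Hu)).
      assert (Hv' := Rle_trans _ _ _ (Rmax_r L (M/eps)) (Rlt_le _ _ Hv)).
      assert (Hd : F v - F u = RInt f u v).
      { unfold F. rewrite <- (RInt_Chasles f L u v) by auto. unfold plus; simpl. ring. }
      rewrite Hd.
      assert (Hep := cond_pos eps).
      destruct (Rle_dec u v) as [Huv|Huv].
      + eapply Rle_lt_trans. apply Key. lra.
        eapply Rle_lt_trans; [|apply (Rpos_exp_bound M eps u); auto; lra].
        assert (0 < exp (-2*v)) by apply exp_pos. nra.
      + rewrite <- opp_RInt_swap by auto. unfold opp; simpl. rewrite Rabs_Ropp.
        eapply Rle_lt_trans. apply Key. lra.
        eapply Rle_lt_trans; [|apply (Rpos_exp_bound M eps v); auto; lra].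
        assert (0 < exp (-2*u)) by apply exp_pos. nra. }
  destruct Hc as [l Hl]. exists l. split.
  - intros P HP. apply (Filter_prod _ _ _ (fun a => a = L) (fun b => P (F b))).
    + reflexivity.
    + apply Hl. auto.
    + intros a b Ha Hb'. simpl. subst a. exists (F b). split; auto.
      apply (RInt_correct (V:=R_CompleteNormedModule)). auto.
  - destruct (Rle_dec (Rabs l) (M / 2 * exp (-2 * L))) as [H|H]; auto. exfalso.
    apply Rnot_le_lt in H.
    set (eps := mkposreal _ (proj2 (Rlt_0_minus _ _) H)).
    assert (HP := Hl (ball l eps) (locally_ball l eps)).
    destruct HP as [N HN].
    set (b := Rmax L N + 1).
    assert (Hb1 : N < b) by (unfold b; generalize (Rmax_r L N); lra).
    assert (Hb2 : L <= b) by (unfold b; generalize (Rmax_l L N); lra).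
    specialize (HN b Hb1). apply ball_R' in HN. simpl in HN.
    assert (HK := Key L b ltac:(lra)).
    assert (0 < exp (-2*b)) by apply exp_pos.
    fold (F b) in HK.
    assert (Rabs l <= Rabs (F b) + Rabs (F b - l)).
    { replace l with (F b - (F b - l)) at 1 by ring. unfold Rminus at 1. eapply Rle_trans; [apply Rabs_triang|]. rewrite Rabs_Ropp. lra. }
    nra.
Qed.

Lemma tail_left (f : R -> R) (M U : R) :
  (forall x, continuous f x) -> 0 <= M ->
  (forall x, x <= U -> Rabs (f x) <= M * exp (2 * x)) ->
  exists l, is_RInt_gen f (Rbar_locally m_infty) (at_point U) l /\
            Rabs l <= M / 2 * exp (2 * U).
Proof.
  intros Hf HM Hb.
  assert (Key : forall a b, a <= b <= U -> Rabs (RInt f a b) <= M/2 * (exp (2*b) - exp (2*a))).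
  { intros a b Hab. rewrite <- RInt_h_left. apply RInt_abs_bound; try lra; auto.
    intros; apply cont_h_left. intros x Hx; apply Hb; lra. }
  assert (Ex : forall a b, ex_RInt f a b) by (intros; apply (ex_RInt_continuous (V:=R_CompleteNormedModule)); auto).
  assert (Hsm : forall eps : posreal, forall u, u <= - (M/eps) -> M/2 * exp (2*u) < eps).
  { intros eps u Hu. replace (2*u) with (-2 * (-u)) by ring. apply Rpos_exp_bound; auto.
    apply cond_pos. lra. }
  set (F := fun a => RInt f a U).
  assert (Hc : exists l, filterlim F (Rbar_locally m_infty) (locally l)).
  { apply (filterlim_locally_cauchy (F := Rbar_locally m_infty)).
    intros eps. exists (fun b => b < Rmin U (- (M / eps))). split.
    - exists (Rmin U (- (M/eps))). auto.
    - intros u v Hu Hv. apply ball_R.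
      assert (HuL := Rle_trans _ _ _ (Rlt_le _ _ Hu) (Rmin_l U (-(M/eps)))).
      assert (HvL := Rle_trans _ _ _ (Rlt_le _ _ Hv) (Rmin_l U (-(M/eps)))).
      assert (Hu' := Rle_trans _ _ _ (Rlt_le _ _ Hu) (Rmin_r U (-(M/eps)))).
      assert (Hv' := Rle_trans _ _ _ (Rlt_le _ _ Hv) (Rmin_r U (-(M/eps)))).
      assert (Hd : F u - F v = RInt f u v).
      { unfold F. rewrite <- (RInt_Chasles f u v U) by auto. unfold plus; simpl. ring. }
      replace (F v - F u) with (- (F u - F v)) by ring. rewrite Hd, Rabs_Ropp.
      destruct (Rle_dec u v) as [Huv|Huv].
      + eapply Rle_lt_trans. apply Key. lra.
        eapply Rle_lt_trans; [|apply (Hsm eps v); lra].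
        assert (0 < exp (2*u)) by apply exp_pos. nra.
      + rewrite <- opp_RInt_swap by auto. unfold opp; simpl. rewrite Rabs_Ropp.
        eapply Rle_lt_trans. apply Key. lra.
        eapply Rle_lt_trans; [|apply (Hsm eps u); lra].
        assert (0 < exp (2*v)) by apply exp_pos. nra. }
  destruct Hc as [l Hl]. exists l. split.
  - intros P HP. apply (Filter_prod _ _ _ (fun a => P (F a)) (fun b => b = U)).
    + apply Hl. auto.
    + reflexivity.
    + intros a b Ha Hb'. simpl. subst b. exists (F a). split; auto.
      apply (RInt_correct (V:=R_CompleteNormedModule)). auto.
  - destruct (Rle_dec (Rabs l) (M / 2 * exp (2 * U))) as [H|H]; auto. exfalso.
    apply Rnot_le_lt in H.
    set (eps := mkposreal _ (proj2 (Rlt_0_minus _ _) H)).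
    assert (HP := Hl (ball l eps) (locally_ball l eps)).
    destruct HP as [N HN].
    set (b := Rmin U N - 1).
    assert (Hb1 : b < N) by (unfold b; generalize (Rmin_r U N); lra).
    assert (Hb2 : b <= U) by (unfold b; generalize (Rmin_l U N); lra).
    specialize (HN b Hb1). apply ball_R' in HN. simpl in HN.
    assert (HK := Key b U ltac:(lra)).
    assert (0 < exp (2*b)) by apply exp_pos.
    fold (F b) in HK.
    assert (Rabs l <= Rabs (F b) + Rabs (F b - l)).
    { replace l with (F b - (F b - l)) at 1 by ring. unfold Rminus at 1. eapply Rle_trans; [apply Rabs_triang|]. rewrite Rabs_Ropp. lra. }
    nra.
Qed.

Definition pp (mu x : R) := 1 + mu * cos x.
Definition F1 (mu x : R) := 2*mu*sin x / pp mu x ^ 3.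
Definition F2 (mu x : R) := 2*mu*cos x / pp mu x ^ 3 + 6*mu^2*sin x ^ 2 / pp mu x ^ 4.
Definition F3 (mu x : R) := -2*mu*sin x / pp mu x ^ 3 + 18*mu^2*sin x*cos x / pp mu x ^ 4
   + 24*mu^3*sin x ^ 3 / pp mu x ^ 5.
Definition G1 (y : R) := 2*y - 4*y^3.
Definition G2 (y : R) := 2 - 12*y^2.
Definition G3 (y : R) := -24*y.

Lemma pp_pos mu x : 0 < mu -> mu < /4 -> 3/4 <= pp mu x.
Proof. intros. unfold pp. generalize (COS_bound x). nra. Qed.

Ltac nz := repeat split; repeat (apply Rmult_integral_contrapositive_currified || apply pow_nonzero); try lra.
Section S.
Variables (mu : R) (Hm : 0 < mu) (Hm4 : mu < /4).

Lemma dF0 x : is_derive (fcoef mu) x (F1 mu x).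
Proof. generalize (pp_pos mu x Hm Hm4); intro Hp. unfold fcoef, F1, pp in *.
  auto_derive. nz. field. lra. Qed.
Lemma dF1 x : is_derive (F1 mu) x (F2 mu x).
Proof. generalize (pp_pos mu x Hm Hm4); intro Hp. unfold F1, F2, pp in *.
  auto_derive. nz. field. lra. Qed.
Lemma dF2 x : is_derive (F2 mu) x (F3 mu x).
Proof. generalize (pp_pos mu x Hm Hm4); intro Hp. unfold F2, F3, pp in *.
  auto_derive. nz. field. lra. Qed.
End S.
Lemma dG0 y : is_derive gcoef y (G1 y).
Proof. unfold gcoef, G1. auto_derive; auto. ring. Qed.
Lemma dG1 y : is_derive G1 y (G2 y).
Proof. unfold G1, G2. auto_derive; auto. ring. Qed.
Lemma dG2 y : is_derive G2 y (G3 y).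
Proof. unfold G3, G2. auto_derive; auto. ring. Qed.

Lemma fcoef_pos mu x : 0 < mu -> mu < /4 -> 0 < fcoef mu x.
Proof. intros. unfold fcoef. apply Rinv_0_lt_compat. generalize (pp_pos mu x H H0). unfold pp. intro. nra. Qed.
Lemma gcoef_nonneg y : -1 <= y <= 1 -> 0 <= gcoef y.
Proof. intros. unfold gcoef. apply Rmult_le_pos. apply pow2_ge_0. simpl. nra. Qed.
Lemma lam_pos mu x y : 0 < mu -> mu < /4 -> -1 <= y <= 1 -> 0 < lam mu x y.
Proof. intros. unfold lam. generalize (fcoef_pos mu x H H0) (gcoef_nonneg y H1). lra. Qed.

Definition Kf mu x y := -(F2 mu x + G2 y)/(2*lam mu x y^2) + (F1 mu x^2 + G1 y^2)/(2*lam mu x y^3).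
Definition Kxf mu x y := -F3 mu x/(2*lam mu x y^2) + (F2 mu x + G2 y)*F1 mu x/lam mu x y^3
   + F1 mu x * F2 mu x/lam mu x y^3 - 3*(F1 mu x^2 + G1 y^2)*F1 mu x/(2*lam mu x y^4).
Definition Kyf mu x y := -G3 y/(2*lam mu x y^2) + (F2 mu x + G2 y)*G1 y/lam mu x y^3
   + G1 y * G2 y/lam mu x y^3 - 3*(F1 mu x^2 + G1 y^2)*G1 y/(2*lam mu x y^4).

Section T.
Variables (mu : R) (Hm : 0 < mu) (Hm4 : mu < /4).

Lemma DF0 x : Derive (fun s => fcoef mu s) x = F1 mu x.
Proof. apply is_derive_unique, dF0; auto. Qed.
Lemma DF1 x : Derive (fun s => F1 mu s) x = F2 mu x.
Proof. apply is_derive_unique, dF1; auto. Qed.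
Lemma DF2 x : Derive (fun s => F2 mu s) x = F3 mu x.
Proof. apply is_derive_unique, dF2; auto. Qed.
Lemma DG0 x : Derive (fun s => gcoef s) x = G1 x.
Proof. apply is_derive_unique, dG0; auto. Qed.
Lemma DG1 x : Derive (fun s => G1 s) x = G2 x.
Proof. apply is_derive_unique, dG1; auto. Qed.
Lemma DG2 x : Derive (fun s => G2 s) x = G3 x.
Proof. apply is_derive_unique, dG2; auto. Qed.
Lemma EF0 x : ex_derive (fun s => fcoef mu s) x.
Proof. eexists; apply dF0; auto. Qed.
Lemma EF1 x : ex_derive (fun s => F1 mu s) x.
Proof. eexists; apply dF1; auto. Qed.
Lemma EF2 x : ex_derive (fun s => F2 mu s) x.
Proof. eexists; apply dF2; auto. Qed.
Lemma EG0 x : ex_derive (fun s => gcoef s) x.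
Proof. eexists; apply dG0; auto. Qed.
Lemma EG1 x : ex_derive (fun s => G1 s) x.
Proof. eexists; apply dG1; auto. Qed.
Lemma EG2 x : ex_derive (fun s => G2 s) x.
Proof. eexists; apply dG2; auto. Qed.

Ltac dsimp := rewrite ?DF0, ?DF1, ?DF2, ?DG0, ?DG1, ?DG2.
Ltac dside := repeat split; auto using EF0, EF1, EF2, EG0, EG1, EG2.

Lemma Dlnx y t : -1 <= y <= 1 -> Derive (fun s => ln (lam mu s y)) t = F1 mu t / lam mu t y.
Proof. intros Hy. generalize (lam_pos mu t y Hm Hm4 Hy). intro Hl.
  apply is_derive_unique. unfold lam in *. auto_derive. dside. dsimp. field. lra. Qed.

Lemma Dlny x t : -1 <= t <= 1 -> Derive (fun s => ln (lam mu x s)) t = G1 t / lam mu x t.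
Proof. intros Hy. generalize (lam_pos mu x t Hm Hm4 Hy). intro Hl.
  apply is_derive_unique. unfold lam in *. auto_derive. dside. dsimp. field. lra. Qed.

Lemma D2lnx x y : -1 <= y <= 1 -> Derive (fun t => Derive (fun s => ln (lam mu s y)) t) x
   = (F2 mu x * lam mu x y - F1 mu x ^ 2) / lam mu x y ^ 2.
Proof. intros Hy. rewrite (Derive_ext _ (fun t => F1 mu t / lam mu t y)) by (intro; apply Dlnx; auto).
  generalize (lam_pos mu x y Hm Hm4 Hy). intro Hl.
  apply is_derive_unique. unfold lam in *. auto_derive. dside. lra. dsimp. field. lra. Qed.

Lemma D2lny x y : -1 < y < 1 -> Derive (fun t => Derive (fun s => ln (lam mu x s)) t) y
   = (G2 y * lam mu x y - G1 y ^ 2) / lam mu x y ^ 2.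
Proof. intros Hy. rewrite (Derive_ext_loc _ (fun t => G1 t / lam mu x t)).
  2:{ apply (locally_interval _ y (-1) 1); simpl; try lra. intros; apply Dlny; lra. }
  generalize (lam_pos mu x y Hm Hm4 ltac:(lra)). intro Hl.
  apply is_derive_unique. unfold lam in *. auto_derive. dside. lra. dsimp. field. lra. Qed.

Lemma Kcurv_eq x y : -1 < y < 1 -> Kcurv mu x y = Kf mu x y.
Proof. intros Hy. unfold Kcurv. rewrite D2lnx, D2lny by lra.
  generalize (lam_pos mu x y Hm Hm4 ltac:(lra)). intro Hl.
  unfold Kf. field. lra. Qed.

Lemma Kx_eq x y : -1 < y < 1 -> Kx mu x y = Kxf mu x y.
Proof. intros Hy. unfold Kx. rewrite (Derive_ext _ (fun t => Kf mu t y)) by (intro; apply Kcurv_eq; auto).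
  generalize (lam_pos mu x y Hm Hm4 ltac:(lra)). intro Hl.
  apply is_derive_unique. unfold Kf, Kxf, lam in *. auto_derive. dside; nz. dsimp. field. lra. Qed.

Lemma Ky_eq x y : -1 < y < 1 -> Ky mu x y = Kyf mu x y.
Proof. intros Hy. unfold Ky. rewrite (Derive_ext_loc _ (fun t => Kf mu x t)).
  2:{ apply (locally_interval _ y (-1) 1); simpl; try lra. intros; apply Kcurv_eq; lra. }
  generalize (lam_pos mu x y Hm Hm4 ltac:(lra)). intro Hl.
  apply is_derive_unique. unfold Kf, Kyf, lam in *. auto_derive. dside; nz. dsimp. field. lra. Qed.
End T.

Lemma am a b A B : Rabs a <= A -> Rabs b <= B -> Rabs (a*b) <= A*B.
Proof. intros. rewrite Rabs_mult. apply Rmult_le_compat; auto using Rabs_pos. Qed.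
Lemma aa a b A B : Rabs a <= A -> Rabs b <= B -> Rabs (a+b) <= A+B.
Proof. intros. eapply Rle_trans. apply Rabs_triang. lra. Qed.
Lemma asb a b A B : Rabs a <= A -> Rabs b <= B -> Rabs (a-b) <= A+B.
Proof. intros. unfold Rminus. eapply Rle_trans. apply Rabs_triang. rewrite Rabs_Ropp. lra. Qed.
Lemma ao a A : Rabs a <= A -> Rabs (-a) <= A.
Proof. rewrite Rabs_Ropp. auto. Qed.
Lemma apow a A n : Rabs a <= A -> Rabs (a^n) <= A^n.
Proof. intros. rewrite <- RPow_abs. apply pow_incr. split; auto using Rabs_pos. Qed.
Lemma ac c : 0 <= c -> Rabs c <= c.
Proof. intros. rewrite Rabs_pos_eq; lra. Qed.

Lemma acn c : c <= 0 -> Rabs c <= -c.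
Proof. intros. rewrite Rabs_left1; lra. Qed.

Ltac bnd := match goal with
 | |- Rabs (_ * _) <= _ => eapply am; [bnd|bnd]
 | |- Rabs (_ + _) <= _ => eapply aa; [bnd|bnd]
 | |- Rabs (_ - _) <= _ => eapply asb; [bnd|bnd]
 | |- Rabs (- _) <= _ => eapply ao; bnd
 | |- Rabs (_ ^ _) <= _ => eapply apow; bnd
 | |- _ => first [eassumption | apply ac; lra | apply acn; lra ]
 end.

Section B.
Variables (mu : R) (Hm : 0 < mu) (Hm4 : mu < /4).

Lemma q_bound x : 0 < / pp mu x <= 4/3.
Proof. generalize (pp_pos mu x Hm Hm4); intro. split. apply Rinv_0_lt_compat; lra.
  replace (4/3) with (/ (3/4)) by field. apply Rinv_le_contravar; lra. Qed.

Lemma bF1 x : Rabs (F1 mu x) <= 6/5.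
Proof. generalize (q_bound x) (pp_pos mu x Hm Hm4); intros [Hq1 Hq2] Hp.
  assert (Hs: Rabs (sin x) <= 1) by (apply Rabs_le; apply SIN_bound).
  assert (Hq: Rabs (/ pp mu x) <= 4/3) by (rewrite Rabs_pos_eq; lra).
  assert (Hmu: Rabs mu <= /4) by (rewrite Rabs_pos_eq; lra).
  unfold F1. replace (2 * mu * sin x / pp mu x ^ 3) with (2*mu*sin x * (/ pp mu x)^3)
    by (field; lra).
  eapply Rle_trans. bnd. lra. Qed.

Lemma bF2 x : Rabs (F2 mu x) <= 12/5.
Proof. generalize (q_bound x) (pp_pos mu x Hm Hm4); intros [Hq1 Hq2] Hp.
  assert (Hs: Rabs (sin x) <= 1) by (apply Rabs_le; apply SIN_bound).
  assert (Hc: Rabs (cos x) <= 1) by (apply Rabs_le; apply COS_bound).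
  assert (Hq: Rabs (/ pp mu x) <= 4/3) by (rewrite Rabs_pos_eq; lra).
  assert (Hmu: Rabs mu <= /4) by (rewrite Rabs_pos_eq; lra).
  unfold F2. replace (2 * mu * cos x / pp mu x ^ 3 + 6 * mu ^ 2 * sin x ^ 2 / pp mu x ^ 4)
   with (2*mu*cos x * (/ pp mu x)^3 + 6 * mu ^ 2 * sin x ^ 2 * (/ pp mu x)^4)
    by (field; lra).
  eapply Rle_trans. bnd. lra. Qed.

Lemma bF3 x : Rabs (F3 mu x) <= 32/5.
Proof. generalize (q_bound x) (pp_pos mu x Hm Hm4); intros [Hq1 Hq2] Hp.
  assert (Hs: Rabs (sin x) <= 1) by (apply Rabs_le; apply SIN_bound).
  assert (Hc: Rabs (cos x) <= 1) by (apply Rabs_le; apply COS_bound).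
  assert (Hq: Rabs (/ pp mu x) <= 4/3) by (rewrite Rabs_pos_eq; lra).
  assert (Hmu: Rabs mu <= /4) by (rewrite Rabs_pos_eq; lra).
  unfold F3. replace (-2*mu*sin x / pp mu x ^ 3 + 18*mu^2*sin x*cos x / pp mu x ^ 4
   + 24*mu^3*sin x ^ 3 / pp mu x ^ 5)
   with (-2*mu*sin x * (/ pp mu x)^3 + 18*mu^2*sin x*cos x * (/ pp mu x)^4
   + 24*mu^3*sin x ^ 3 * (/ pp mu x)^5)
    by (field; lra).
  eapply Rle_trans. bnd. lra. Qed.

Lemma u_bound x y : -1 <= y <= 1 -> 0 < / lam mu x y <= 25/16.
Proof. intros Hy. generalize (lam_pos mu x y Hm Hm4 Hy) (gcoef_nonneg y Hy); intros Hl Hg.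
  split. apply Rinv_0_lt_compat; lra.
  assert (Hp : pp mu x <= 5/4) by (unfold pp; generalize (COS_bound x); nra).
  generalize (pp_pos mu x Hm Hm4); intro Hp'.
  apply Rle_trans with (/ fcoef mu x).
  apply Rinv_le_contravar. apply fcoef_pos; auto. unfold lam in *; lra.
  unfold fcoef. rewrite Rinv_inv. change (1 + mu * cos x) with (pp mu x). simpl. nra. Qed.

Lemma bKx x y : 0 < y <= 1/2 -> Rabs (Kxf mu x y) <= 66.
Proof. intros Hy.
  generalize (u_bound x y ltac:(lra)) (lam_pos mu x y Hm Hm4 ltac:(lra)); intros [Hu1 Hu2] Hl.
  assert (Hu: Rabs (/ lam mu x y) <= 25/16) by (rewrite Rabs_pos_eq; lra).
  generalize (bF1 x) (bF2 x) (bF3 x); intros H1 H2 H3.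
  assert (HG1 : Rabs (G1 y) <= 1) by (unfold G1; apply Rabs_le; nra).
  assert (HG2 : Rabs (G2 y) <= 2) by (unfold G2; apply Rabs_le; nra).
  unfold Kxf.
  replace (- F3 mu x / (2 * lam mu x y ^ 2) + (F2 mu x + G2 y) * F1 mu x / lam mu x y ^ 3 +
    F1 mu x * F2 mu x / lam mu x y ^ 3 - 3 * (F1 mu x ^ 2 + G1 y ^ 2) * F1 mu x / (2 * lam mu x y ^ 4))
  with (- F3 mu x * /2 * (/lam mu x y) ^ 2 + (F2 mu x + G2 y) * F1 mu x * (/lam mu x y) ^ 3 +
    F1 mu x * F2 mu x * (/ lam mu x y) ^ 3 - 3/2 * (F1 mu x ^ 2 + G1 y ^ 2) * F1 mu x * (/lam mu x y)^4)
  by (field; lra).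
  eapply Rle_trans. bnd. lra. Qed.

Lemma bKy x y : 0 < y <= 1/2 -> Rabs (Kyf mu x y) <= 122 * y.
Proof. intros Hy.
  generalize (u_bound x y ltac:(lra)) (lam_pos mu x y Hm Hm4 ltac:(lra)); intros [Hu1 Hu2] Hl.
  assert (Hu: Rabs (/ lam mu x y) <= 25/16) by (rewrite Rabs_pos_eq; lra).
  generalize (bF1 x) (bF2 x); intros H1 H2.
  assert (HG1 : Rabs (G1 y) <= 2*y) by (unfold G1; apply Rabs_le; nra).
  assert (HG2 : Rabs (G2 y) <= 2) by (unfold G2; apply Rabs_le; nra).
  assert (HG3 : Rabs (G3 y) <= 24*y) by (unfold G3; apply Rabs_le; nra).
  unfold Kyf.
  replace (- G3 y / (2 * lam mu x y ^ 2) + (F2 mu x + G2 y) * G1 y / lam mu x y ^ 3 +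
   G1 y * G2 y / lam mu x y ^ 3 - 3 * (F1 mu x ^ 2 + G1 y ^ 2) * G1 y / (2 * lam mu x y ^ 4))
  with (- G3 y * /2 * (/lam mu x y) ^ 2 + (F2 mu x + G2 y) * G1 y * (/lam mu x y) ^ 3 +
    G1 y * G2 y * (/ lam mu x y) ^ 3 - 3/2 * (F1 mu x ^ 2 + G1 y ^ 2) * G1 y * (/lam mu x y)^4)
  by (field; lra).
  eapply Rle_trans. bnd. nra. Qed.
End B.

Definition gd (s : R) := -(exp s - exp (-s)) / (exp s + exp (-s))^2.

Lemma exp_inv_prod s : exp s * exp (-s) = 1.
Proof. rewrite <- exp_plus. replace (s + -s) with 0 by ring. apply exp_0. Qed.

Lemma gam_eq s : gam s = / (exp s + exp (-s)).
Proof. unfold gam, sech. generalize (exp_pos s) (exp_pos (-s)); intros. field. lra. Qed.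

Lemma gam_facts s : 0 < gam s <= 1/2 /\ gam s <= exp (-s) /\ gam s <= exp s /\ Rabs (gd s) <= gam s.
Proof. rewrite gam_eq. unfold gd. generalize (exp_pos s) (exp_pos (-s)) (exp_inv_prod s).
  set (A := exp s); set (B := exp (-s)). intros HA HB HAB.
  assert (Hs : 0 < A + B) by lra.
  assert (Hi : 0 < / (A+B)) by (apply Rinv_0_lt_compat; lra).
  clearbody A B. assert (H2 : (A+B)*(A+B) >= 4) by (replace ((A+B)*(A+B)) with ((A-B)*(A-B) + 4*(A*B)) by ring; rewrite HAB; generalize (Rle_0_sqr (A-B)); unfold Rsqr; lra).
  assert (H2' : A + B >= 2) by nra.
  repeat split.
  - auto.
  - apply Rmult_le_reg_l with (A+B); auto. rewrite Rinv_r by lra. nra.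
  - apply Rmult_le_reg_l with (A+B); auto. rewrite Rinv_r by lra. nra.
  - apply Rmult_le_reg_l with (A+B); auto. rewrite Rinv_r by lra. nra.
  - unfold gd. rewrite Rabs_div by (apply pow_nonzero; lra).
    rewrite Rabs_Ropp, (Rabs_pos_eq ((A+B)^2)) by (apply pow2_ge_0).
    apply Rmult_le_reg_l with ((A+B)^2). apply pow_lt; lra.
    field_simplify; try lra. apply Rabs_le. split; nra.
Qed.

Lemma dyc mu kappa x : is_derive (ycurve mu kappa) x (gd (kappa + x + mu * sin x) * (1 + mu * cos x)).
Proof. unfold ycurve, gam, sech, gd.
  generalize (exp_pos (kappa + x + mu * sin x)) (exp_pos (-(kappa + x + mu * sin x))). intros.
  auto_derive. lra. field. lra. Qed.

Section M.
Variables (mu kappa : R) (Hm : 0 < mu) (Hm4 : mu < /4).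

Definition sc x := kappa + x + mu * sin x.

Definition Iform x := Kxf mu x (ycurve mu kappa x) * gcoef (ycurve mu kappa x)
  - Kyf mu x (ycurve mu kappa x) * fcoef mu x * (gd (sc x) * (1 + mu * cos x)).

Lemma Iint_eq x : Iint mu kappa x = Iform x.
Proof. unfold Iint, Iform.
  destruct (gam_facts (sc x)) as [[H1 H2] _].
  assert (Hy : -1 < ycurve mu kappa x < 1) by (unfold ycurve; fold (sc x); lra).
  rewrite Kx_eq, Ky_eq by auto.
  rewrite (is_derive_unique _ _ _ (dyc mu kappa x)). reflexivity. Qed.

Lemma Ibound x : Rabs (Iint mu kappa x) <= 340 * ycurve mu kappa x ^ 2.
Proof. rewrite Iint_eq. unfold Iform.
  destruct (gam_facts (sc x)) as [[H1 H2] [_ [_ H3]]].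
  unfold ycurve. fold (sc x). set (y := gam (sc x)) in *.
  assert (Hy : 0 < y <= 1/2) by lra.
  generalize (bKx mu Hm Hm4 x y Hy) (bKy mu Hm Hm4 x y Hy); intros HX HY.
  assert (Hy2 : 0 < y^2 <= 1/4) by (split; [apply pow_lt; lra | simpl; nra]).
  assert (Hg : Rabs (gcoef y) <= y^2).
  { unfold gcoef. rewrite Rabs_pos_eq. apply Rle_trans with (y^2*1); [apply Rmult_le_compat_l; lra | lra]. apply Rmult_le_pos; lra. }
  assert (Hf : Rabs (fcoef mu x) <= 16/9).
  { generalize (pp_pos mu x Hm Hm4) (fcoef_pos mu x Hm Hm4); intros. rewrite Rabs_pos_eq by lra.
    unfold fcoef. replace (16/9) with (/ (9/16)) by field. apply Rinv_le_contravar. lra.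
    change (1 + mu * cos x) with (pp mu x). simpl. nra. }
  assert (Hc : Rabs (1 + mu * cos x) <= 5/4) by (apply Rabs_le; generalize (COS_bound x); nra).
  eapply Rle_trans. bnd. nra. Qed.
End M.

Lemma EF3 mu x : 0 < mu -> mu < /4 -> ex_derive (fun s => F3 mu s) x.
Proof. intros. generalize (pp_pos mu x H H0); intro Hp. unfold F3, pp in *. auto_derive. nz. Qed.
Lemma EG3 x : ex_derive (fun s => G3 s) x.
Proof. unfold G3. auto_derive. auto. Qed.
Lemma Eyc mu kappa x : ex_derive (fun s => ycurve mu kappa s) x.
Proof. eexists. apply dyc. Qed.

Lemma Iint_cont mu kappa x : 0 < mu -> mu < /4 -> continuous (Iint mu kappa) x.
Proof. intros Hm Hm4.
  apply (continuous_ext (Iform mu kappa)). intros; symmetry; apply Iint_eq; auto.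
  apply (ex_derive_continuous (K:=R_AbsRing) (V:=R_NormedModule)).
  destruct (gam_facts (sc mu kappa x)) as [[H1 H2] _].
  assert (Hl : 0 < lam mu x (ycurve mu kappa x)).
  { apply lam_pos; auto. unfold ycurve. fold (sc mu kappa x). lra. }
  unfold lam in Hl.
  generalize (exp_pos (kappa + x + mu * sin x)) (exp_pos (-(kappa + x + mu * sin x))). intros.
  unfold Iform, Kxf, Kyf, lam, gd, sc. auto_derive.
  repeat split; auto using EF0, EF1, EF2, EF3, EG0, EG1, EG2, EG3, Eyc;
  repeat (apply Rmult_integral_contrapositive_currified || apply pow_nonzero); lra.
Qed.

Lemma exp_mono x y : x <= y -> exp x <= exp y.
Proof. intros [H|H]. left; apply exp_increasing; auto. subst; lra. Qed.

Lemma final_ineq K P A B : 0 < K -> 0 < P <= 7/4 -> 0 < A -> 0 < B -> A*B = 1 -> B <= 1 ->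
  340 * (K*P) * B^2 <= 1200 * (1 + 2*K) * (/(A+B))^2.
Proof. intros HK HP HA HB HAB HB1.
  assert (Hw : 0 < (/(A+B))^2) by (apply pow_lt, Rinv_0_lt_compat; lra).
  assert (HE : B^2 = (1 + B^2)^2 * (/(A+B))^2).
  { replace (1 + B^2) with (B*(A+B)) by (simpl; nra). field. lra. }
  rewrite HE.
  assert (H4 : (1 + B^2)^2 <= 4).
  { assert (0 <= B^2 <= 1) by (simpl; nra). simpl. nra. }
  rewrite <- Rmult_assoc. apply Rmult_le_compat_r. lra.
  assert (0 < K*P) by nra.
  apply Rle_trans with (340 * (K*P) * 4). apply Rmult_le_compat_l; nra. nra.
Qed.

Theorem mainTheorem9 (mu kappa L : R) :
  0 < mu -> mu < / 4 -> 0 < L ->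
  exists I1 I2 : R,
    is_RInt_gen (Iint mu kappa) (Rbar_locally m_infty) (at_point (- L)) I1 /\
    is_RInt_gen (Iint mu kappa) (at_point L) (Rbar_locally p_infty) I2 /\
    Rabs (I1 + I2) <= 1200 * (1 + 2 * exp (2 * Rabs kappa)) * (gam L) ^ 2.
Proof.
  intros Hm Hm4 HL.
  set (M := 340 * exp (2 * Rabs kappa + 2 * mu)).
  assert (HM : 0 <= M) by (unfold M; generalize (exp_pos (2 * Rabs kappa + 2 * mu)); lra).
  assert (Hk1 := Rle_abs kappa). assert (Hk2 := Rle_abs (-kappa)). rewrite Rabs_Ropp in Hk2.
  assert (Hsq : forall x y e : R, 0 < y -> y <= exp e -> 340 * y^2 <= 340 * exp (2*e)).
  { intros x y e Hy He. replace (2*e) with (e+e) by ring. rewrite exp_plus.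
    assert (y^2 <= exp e * exp e) by (simpl; generalize (exp_pos e); nra). lra. }
  destruct (tail_right (Iint mu kappa) M L (fun x => Iint_cont mu kappa x Hm Hm4) HM) as [I2 [HI2 HB2]].
  { intros x Hx. eapply Rle_trans. apply Ibound; auto.
    destruct (gam_facts (sc mu kappa x)) as [[H1 H2] [H3 _]].
    unfold ycurve. fold (sc mu kappa x).
    eapply Rle_trans. apply (Hsq x _ _ H1 H3).
    unfold M. rewrite Rmult_assoc, <- exp_plus. apply Rmult_le_compat_l. lra.
    apply exp_mono. unfold sc. generalize (SIN_bound x). nra. }
  destruct (tail_left (Iint mu kappa) M (-L) (fun x => Iint_cont mu kappa x Hm Hm4) HM) as [I1 [HI1 HB1]].
  { intros x Hx. eapply Rle_trans. apply Ibound; auto.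
    destruct (gam_facts (sc mu kappa x)) as [[H1 H2] [_ [H3 _]]].
    unfold ycurve. fold (sc mu kappa x).
    eapply Rle_trans. apply (Hsq x _ _ H1 H3).
    unfold M. rewrite Rmult_assoc, <- exp_plus. apply Rmult_le_compat_l. lra.
    apply exp_mono. unfold sc. generalize (SIN_bound x). nra. }
  exists I1, I2. split; [auto|split; [auto|]].
  eapply Rle_trans. apply Rabs_triang.
  replace (2 * - L) with (-2 * L) in HB1 by ring.
  apply Rle_trans with (M * exp (-2 * L)). lra.
  rewrite gam_eq.
  assert (HeL : exp (-2 * L) = exp (-L) ^ 2).
  { simpl. rewrite Rmult_1_r, <- exp_plus. f_equal. ring. }
  rewrite HeL. unfold M. rewrite exp_plus.
  assert (HP : 0 < exp (2*mu) <= 7/4).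
  { split. apply exp_pos.
    assert (exp (2*mu) * exp (2*mu) <= 3).
    { rewrite <- exp_plus. eapply Rle_trans; [|apply exp_le_3]. apply exp_mono. lra. }
    generalize (exp_pos (2*mu)). nra. }
  apply final_ineq; auto.
  - apply exp_pos.
  - apply exp_pos.
  - apply exp_pos.
  - apply exp_inv_prod.
  - replace 1 with (exp 0) by apply exp_0. apply exp_mono. lra.
Qed.
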